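(* Let $p>2$ be an odd integer and $n\ge 1$. Then every regular expression describing the divisibility language $L^{\mathrm{div}}_{n,p}=\{ w\in \{0,1\}^n : \mathrm{bin}(w) \equiv 0 \pmod p\}$ has length at least $\mathrm{rpn}(L^{\mathrm{div}}_{n,p}) \geq \Omega\big( n^{-1} p^{\log ( n/ \log p ) -2 } \big)$.
   Context: For $w=w_1\cdots w_d\in\{0,1\}^*$, $\mathrm{bin}(w)=\sum_{i=1}^d w_i2^{d-i}$ is its value as a binary number with the most significant bit leftmost ($\mathrm{bin}(\epsilon)=0$). Regular expressions are built from $\epsilon$ and letters by union and concatenation (no $\emptyset$, no star needed for finite languages); $\mathrm{rpn}(L)$ is the minimum number of syntax-tree nodes of an expression describing $L$. Logarithms are base 2. *)

(* Defs.v *)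
From Stdlib Require Import Reals List Arith.
Import ListNotations.
Open Scope R_scope.

Inductive regex : Type :=
  | REps : regex
  | RSym : bool -> regex          (* false = letter 0, true = letter 1 *)
  | RUnion : regex -> regex -> regex
  | RCat : regex -> regex -> regex.

Fixpoint lang (r : regex) (w : list bool) : Prop :=
  match r with
  | REps => w = []
  | RSym b => w = [b]
  | RUnion r1 r2 => lang r1 w \/ lang r2 w
  | RCat r1 r2 => exists u v, w = u ++ v /\ lang r1 u /\ lang r2 v
  end.

(* Number of syntax-tree nodes (the length / rpn size of an expression). *)
Fixpoint rsize (r : regex) : nat :=
  match r with
  | REps => 1
  | RSym _ => 1
  | RUnion r1 r2 => S (rsize r1 + rsize r2)
  | RCat r1 r2 => S (rsize r1 + rsize r2)
  end%nat.

(* bin(w), most significant bit leftmost, bin(epsilon) = 0. *)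
Definition bin (w : list bool) : nat :=
  fold_left (fun acc (b : bool) => (2 * acc + (if b then 1 else 0))%nat) w 0%nat.

Definition Ldiv (n p : nat) (w : list bool) : Prop :=
  length w = n /\ Nat.modulo (bin w) p = 0%nat.

Definition describes (r : regex) (L : list bool -> Prop) : Prop :=
  forall w, lang r w <-> L w.

Definition log2 (x : R) : R := ln x / ln 2.

(* Main.v *)
Require Import Defs.
From Stdlib Require Import Reals List Arith Lia Lra ClassicalDescription.
Import ListNotations.
Open Scope R_scope.

Open Scope nat_scope.

Definition bstep := (fun acc (b : bool) => (2 * acc + (if b then 1 else 0))%nat).

Lemma fold_bin : forall v a, fold_left bstep v a = a * 2 ^ length v + bin v.
Proof.
  unfold bin. fold bstep.
  induction v as [|b v IH]; intros a; simpl.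
  - lia.
  - rewrite (IH (bstep a b)), (IH (bstep 0 b)). unfold bstep. destruct b; ring.
Qed.

Lemma bin_app : forall u v, bin (u ++ v) = bin u * 2 ^ length v + bin v.
Proof.
  intros u v. unfold bin at 1. fold bstep. rewrite fold_left_app.
  rewrite fold_bin. reflexivity.
Qed.

Lemma bin_cons : forall b u, bin (b :: u) = (if b then 1 else 0) * 2 ^ length u + bin u.
Proof.
  intros b u. change (b :: u) with ([b] ++ u). rewrite bin_app. destruct b; reflexivity.
Qed.

Lemma bin_lt : forall w, bin w < 2 ^ length w.
Proof.
  induction w as [|b w IH]; [simpl; unfold bin; simpl; lia|].
  rewrite bin_cons. simpl length. rewrite Nat.pow_succ_r'. destruct b; lia.
Qed.

Lemma bin_inj : forall w w', length w = length w' -> bin w = bin w' -> w = w'.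
Proof.
  induction w as [|b w IH]; intros [|b' w'] Hl Hb; simpl in Hl; try discriminate; auto.
  injection Hl as Hl. rewrite !bin_cons in Hb. rewrite <- Hl in Hb.
  pose proof (bin_lt w). pose proof (bin_lt w'). rewrite <- Hl in *.
  destruct b, b'; f_equal; try (apply IH; auto; lia); lia.
Qed.

Lemma mod_add_cancel : forall p a b x, p <> 0 -> (a + x) mod p = (b + x) mod p -> a mod p = b mod p.
Proof.
  intros p a b x Hp H.
  assert (E : forall c, (c + x + (p - x mod p)) mod p = c mod p).
  { intros c. pose proof (Nat.div_mod_eq x p). pose proof (Nat.mod_upper_bound x p Hp).
    replace (c + x + (p - x mod p)) with (c + (x / p + 1) * p) by nia.
    apply Nat.Div0.mod_add. }
  rewrite <- (E a), <- (E b).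
  rewrite <- (Nat.Div0.add_mod_idemp_l (a + x)), <- (Nat.Div0.add_mod_idemp_l (b + x)), H.
  reflexivity.
Qed.

Lemma pow_succ_mod : forall p m, 1 < p -> (p + 1) ^ m mod p = 1.
Proof.
  intros p m Hp. induction m as [|m IH]; simpl.
  - apply Nat.mod_small; lia.
  - rewrite <- Nat.Div0.mul_mod_idemp_r, IH, Nat.mul_1_r.
    replace (p + 1) with (1 + 1 * p) by lia. rewrite Nat.Div0.mod_add. apply Nat.mod_small; lia.
Qed.

Lemma mod_mul2_cancel : forall p a b m, Nat.Odd p -> 1 < p ->
  (a * 2 ^ m) mod p = (b * 2 ^ m) mod p -> a mod p = b mod p.
Proof.
  intros p a b m [k Hk] Hp H.
  assert (E : forall c, (c * 2 ^ m * (k + 1) ^ m) mod p = c mod p).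
  { intros c. rewrite <- Nat.mul_assoc, <- Nat.pow_mul_l.
    replace (2 * (k + 1)) with (p + 1) by lia.
    rewrite <- Nat.Div0.mul_mod_idemp_r, pow_succ_mod by lia. rewrite Nat.mul_1_r. reflexivity. }
  rewrite <- (E a), <- (E b).
  rewrite <- (Nat.Div0.mul_mod_idemp_l (a * 2 ^ m)), <- (Nat.Div0.mul_mod_idemp_l (b * 2 ^ m)), H.
  reflexivity.
Qed.

Open Scope nat_scope.

Lemma NoDup_map_inj {A B} (f : A -> B) : forall l, NoDup l ->
  (forall x y, In x l -> In y l -> f x = f y -> x = y) -> NoDup (map f l).
Proof.
  induction l as [|a l IH]; intros Hn Hi; simpl; constructor.
  - intros Hin. apply in_map_iff in Hin as [x [Hx Hxl]].
    inversion Hn; subst. assert (x = a) by (apply Hi; simpl; auto). subst; contradiction.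
  - inversion Hn; subst. apply IH; auto. intros; apply Hi; simpl; auto.
Qed.

Lemma len_le_1 {A} (S : list A) w : NoDup S -> (forall y, In y S -> y = w) -> length S <= 1.
Proof.
  intros Hn H. change 1 with (length [w]). apply NoDup_incl_length; auto.
  intros y Hy. rewrite (H y Hy). simpl; auto.
Qed.

Lemma class_bound : forall p T l r, p <> 0 -> NoDup T ->
  (forall u, In u T -> length u = l /\ bin u mod p = r) ->
  length T <= (2 ^ l - 1) / p + 1.
Proof.
  intros p T l r Hp Hn H.
  rewrite <- (length_map (fun u => bin u / p)), <- (length_seq ((2 ^ l - 1) / p + 1) 0).
  apply NoDup_incl_length.
  - apply NoDup_map_inj; auto. intros x y Hx Hy E.
    destruct (H x Hx) as [Hlx Hrx]. destruct (H y Hy) as [Hly Hry].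
    apply bin_inj; [lia|].
    rewrite (Nat.div_mod_eq (bin x) p), (Nat.div_mod_eq (bin y) p), E, Hrx, Hry. reflexivity.
  - intros z Hz. apply in_map_iff in Hz as [u [Hu Hut]]. subst z.
    apply in_seq. split; [lia|].
    destruct (H u Hut) as [Hl _]. pose proof (bin_lt u). rewrite Hl in H0.
    assert (bin u / p <= (2 ^ l - 1) / p) by (apply Nat.Div0.div_le_mono; lia). lia.
Qed.

Lemma prod_bound {A} (S : list (list A)) k T1 T2 : NoDup S ->
  (forall y, In y S -> In (firstn k y) T1 /\ In (skipn k y) T2) ->
  length S <= length T1 * length T2.
Proof.
  intros Hn H. rewrite <- length_prod.
  rewrite <- (length_map (fun y => (firstn k y, skipn k y)) S).
  apply NoDup_incl_length.
  - apply NoDup_map_inj; auto. intros x y _ _ E. injection E as E1 E2.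
    rewrite <- (firstn_skipn k x), <- (firstn_skipn k y), E1, E2. reflexivity.
  - intros z Hz. apply in_map_iff in Hz as [y [Hy Hys]]. subst z.
    destruct (H y Hys). apply in_prod; auto.
Qed.

Lemma filter_split {A} (f : A -> bool) l :
  length l <= length (filter f l) + length (filter (fun x => negb (f x)) l).
Proof.
  induction l as [|a l IH]; simpl; auto. destruct (f a); simpl; lia.
Qed.

Lemma firstn_app_len {A} (u v : list A) : firstn (length u) (u ++ v) = u.
Proof. induction u; simpl; auto. destruct v; auto. f_equal; auto. f_equal; auto. Qed.
Lemma skipn_app_len {A} (u v : list A) : skipn (length u) (u ++ v) = v.
Proof. induction u; simpl; auto. Qed.

Open Scope R_scope.

Definition Lg (p : nat) := ln (INR p) / ln 2.
Definition aa p := Lg p - 1.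
Definition TT p := 2 * Lg p.
Definition MM p (l : nat) := Rmax (INR l) (TT p).
Definition FF p l := exp (aa p * (ln (MM p l) - ln (TT p))).
Definition GG p l := FF p l / 2 ^ l.

Lemma ln2_pos : / 2 < ln 2.
Proof. exact ln_lt_2. Qed.

Lemma ln_le' x y : 0 < x -> x <= y -> ln x <= ln y.
Proof. intros Hx [H|H]; [left; apply ln_increasing; auto | subst; lra]. Qed.

Lemma exp_le' x y : x <= y -> exp x <= exp y.
Proof. intros [H|H]; [left; apply exp_increasing; auto | subst; lra]. Qed.

Lemma ln_le_sub1 x : 0 < x -> ln x <= x - 1.
Proof. intros Hx. pose proof (exp_ineq1_le (ln x)). rewrite exp_ln in H; lra. Qed.


Lemma INRp (p : nat) (Hp : (3 <= p)%nat) : 3 <= INR p.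
Proof. apply le_INR in Hp. simpl in Hp. lra. Qed.

Lemma Lg_gt1 (p : nat) (Hp : (3 <= p)%nat) : 1 < Lg p.
Proof.
  unfold Lg. pose proof ln2_pos. apply Rlt_gt in H. 
  assert (ln 2 < ln (INR p)) by (apply ln_increasing; pose proof (INRp p Hp); lra).
  apply (Rmult_lt_reg_r (ln 2)); [lra|]. unfold Rdiv. rewrite Rmult_assoc, Rinv_l; lra.
Qed.

Lemma lnp_eq (p : nat) (Hp : (3 <= p)%nat) : ln (INR p) = Lg p * ln 2.
Proof. unfold Lg. field. pose proof ln2_pos. lra. Qed.

Lemma TT_gt2 (p : nat) (Hp : (3 <= p)%nat) : 2 < TT p.
Proof. unfold TT. pose proof (Lg_gt1 p Hp). lra. Qed.

Lemma MM_pos (p : nat) (Hp : (3 <= p)%nat) l : 0 < MM p l.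
Proof. unfold MM. pose proof (TT_gt2 p Hp). pose proof (Rmax_r (INR l) (TT p)). lra. Qed.

Lemma aa_pos (p : nat) (Hp : (3 <= p)%nat) : 0 < aa p.
Proof. unfold aa. pose proof (Lg_gt1 p Hp). lra. Qed.

Lemma FF_step (p : nat) (Hp : (3 <= p)%nat) l : FF p (S l) <= 2 * FF p l.
Proof.
  unfold FF. rewrite <- (exp_ln 2) at 1 by lra. rewrite <- exp_plus. apply exp_le'.
  assert (H1 : MM p (S l) <= MM p l + 1).
  { unfold MM. rewrite S_INR. unfold Rmax. destruct (Rle_dec _ _), (Rle_dec _ _); lra. }
  assert (H2 : TT p <= MM p l) by (unfold MM; apply Rmax_r).
  pose proof ((MM_pos p Hp) l) as P1. pose proof ((MM_pos p Hp) (S l)) as P2. pose proof (TT_gt2 p Hp) as P3.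
  assert (H3 : ln (MM p (S l)) - ln (MM p l) <= 1 / TT p).
  { assert (ln (MM p (S l)) <= ln (MM p l + 1)) by (apply ln_le'; lra).
    assert (ln (MM p l + 1) - ln (MM p l) = ln (1 + / MM p l)).
    { replace (MM p l + 1) with (MM p l * (1 + / MM p l)) by (field; lra).
      rewrite ln_mult; try lra. pose proof (Rinv_0_lt_compat (MM p l)); lra. }
    pose proof (ln_le_sub1 (1 + / MM p l)). 
    assert (0 < / MM p l) by (apply Rinv_0_lt_compat; lra).
    assert (/ MM p l <= / TT p) by (apply Rinv_le_contravar; lra).
    unfold Rdiv. lra. }
  assert (H4 : aa p * (1 / TT p) <= / 2).
  { unfold aa, TT. pose proof (Lg_gt1 p Hp). apply (Rmult_le_reg_r (2 * Lg p)); [lra|].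
    field_simplify; lra. }
  pose proof (aa_pos p Hp). pose proof ln2_pos.
  assert (aa p * (ln (MM p (S l)) - ln (MM p l)) <= aa p * (1 / TT p)) by (apply Rmult_le_compat_l; lra).
  nra.
Qed.

Lemma GG_step (p : nat) (Hp : (3 <= p)%nat) l : GG p (S l) <= GG p l.
Proof.
  unfold GG. simpl pow. pose proof ((FF_step p Hp) l). pose proof (pow_lt 2 l ltac:(lra)).
  unfold Rdiv. rewrite Rinv_mult. 
  apply (Rmult_le_reg_r (2 ^ l)); auto.
  replace (FF p (S l) * (/ 2 * / 2 ^ l) * 2 ^ l) with (FF p (S l) / 2) by (field; lra).
  replace (FF p l * / 2 ^ l * 2 ^ l) with (FF p l) by (field; lra). lra.
Qed.

Lemma GG_mono (p : nat) (Hp : (3 <= p)%nat) l m : GG p (l + m) <= GG p l.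
Proof.
  induction m. rewrite Nat.add_0_r; lra. rewrite Nat.add_succ_r. pose proof ((GG_step p Hp) (l + m)). lra.
Qed.

Lemma GG_pos (p : nat) (Hp : (3 <= p)%nat) l : 0 <= GG p l.
Proof. unfold GG, FF. pose proof (exp_pos (aa p * (ln (MM p l) - ln (TT p)))). pose proof (pow_lt 2 l ltac:(lra)).
  left. apply Rdiv_lt_0_compat; auto. Qed.

Lemma GG_le1 (p : nat) (Hp : (3 <= p)%nat) l : GG p l <= 1.
Proof.
  pose proof ((GG_mono p Hp) 0 l). simpl in H. enough (GG p 0 = 1) by lra.
  unfold GG, FF, MM. simpl. rewrite Rmax_right by (pose proof (TT_gt2 p Hp); lra).
  replace (aa p * (ln (TT p) - ln (TT p))) with 0 by ring. rewrite exp_0. field.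
Qed.

Lemma FF_big (p : nat) (Hp : (3 <= p)%nat) l1 l2 : (l2 <= l1)%nat -> FF p (l1 + l2) <= INR p / 2 * FF p l1.
Proof.
  intros Hl. unfold FF.
  replace (INR p / 2) with (exp (aa p * ln 2)).
  2:{ unfold aa. rewrite Rmult_minus_distr_r, <- (lnp_eq p Hp), Rmult_1_l. unfold Rminus.
      rewrite exp_plus, exp_ln by (pose proof (INRp p Hp); lra). rewrite <- ln_Rinv, exp_ln by lra. reflexivity. }
  rewrite <- exp_plus. apply exp_le'.
  assert (MM p (l1 + l2) <= 2 * MM p l1).
  { unfold MM. rewrite plus_INR. apply le_INR in Hl. pose proof (TT_gt2 p Hp).
    unfold Rmax. destruct (Rle_dec _ _), (Rle_dec _ _); lra. }
  pose proof ((MM_pos p Hp) (l1 + l2)). pose proof ((MM_pos p Hp) l1).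
  assert (ln (MM p (l1 + l2)) <= ln 2 + ln (MM p l1)).
  { rewrite <- ln_mult by lra. apply ln_le'; lra. }
  pose proof (aa_pos p Hp). nra.
Qed.

Lemma K_lemma (p : nat) (Hp : (3 <= p)%nat) l1 l2 (t2 : nat) : (t2 <= (2 ^ l2 - 1) / p + 1)%nat -> (l2 <= l1)%nat ->
  GG p (l1 + l2) * INR t2 <= GG p l1.
Proof.
  intros Ht Hl. pose proof ((GG_pos p Hp) (l1 + l2)).
  destruct (le_lt_dec (2 ^ l2) p) as [Hs|Hb].
  - rewrite Nat.div_small in Ht by lia. assert (INR t2 <= 1) by (apply le_INR in Ht; simpl in Ht; lra).
    pose proof ((GG_mono p Hp) l1 l2). nra.
  - assert (Hdiv : INR p * INR ((2 ^ l2 - 1) / p) <= INR (2 ^ l2 - 1)).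
    { rewrite <- mult_INR. apply le_INR. apply Nat.Div0.mul_div_le. }
    assert (Hlt : INR p < 2 ^ l2) by (rewrite <- (pow_INR 2); apply lt_INR; lia).
    rewrite minus_INR in Hdiv by lia. rewrite pow_INR in Hdiv. simpl (INR 2) in Hdiv. simpl (INR 1) in Hdiv.
    pose proof (INRp p Hp).
    assert (Ht2 : INR t2 * INR p <= 2 * 2 ^ l2).
    { apply le_INR in Ht. rewrite plus_INR in Ht. simpl (INR 1) in Ht.
      assert (Hq : INR t2 * INR p <= (INR ((2 ^ l2 - 1) / p) + 1) * INR p) by (apply Rmult_le_compat_r; lra).
      rewrite Rmult_plus_distr_r, Rmult_1_l, (Rmult_comm (INR ((2 ^ l2 - 1) / p))) in Hq. replace ((1+1)^l2) with (2^l2) in Hdiv by (f_equal; ring). lra. }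
    pose proof ((FF_big p Hp) l1 l2 Hl).
    unfold GG in *. rewrite pow_add.
    pose proof (pow_lt 2 l1 ltac:(lra)). pose proof (pow_lt 2 l2 ltac:(lra)).
    assert (0 <= FF p (l1 + l2)) by (unfold FF; left; apply exp_pos).
    assert (0 <= INR t2) by apply pos_INR.
    apply (Rmult_le_reg_r (2 ^ l1 * 2 ^ l2 * INR p)). 
    { apply Rmult_lt_0_compat; [apply Rmult_lt_0_compat|]; lra. }
    replace (FF p (l1 + l2) / (2 ^ l1 * 2 ^ l2) * INR t2 * (2 ^ l1 * 2 ^ l2 * INR p))
      with (FF p (l1 + l2) * (INR t2 * INR p)) by (field; lra).
    replace (FF p l1 / 2 ^ l1 * (2 ^ l1 * 2 ^ l2 * INR p)) with (FF p l1 * INR p * 2 ^ l2) by (field; lra).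
    apply Rle_trans with (FF p (l1 + l2) * (2 * 2 ^ l2)). apply Rmult_le_compat_l; lra.
    nra.
Qed.

Open Scope R_scope.

Definition cons_ (p : nat) (v : regex) := forall y y', lang v y -> lang v y' ->
  length y = length y' /\ (bin y mod p = bin y' mod p)%nat.

Lemma main_lemma p (Hp : (3 <= p)%nat) (Hodd : Nat.Odd p) : forall v, cons_ p v ->
  forall S l, NoDup S -> (forall y, In y S -> lang v y /\ length y = l) ->
  INR (length S) * GG p l <= INR (rsize v).
Proof.
  induction v as [| b | v1 IH1 v2 IH2 | v1 IH1 v2 IH2]; intros Hc S l Hn HS.
  - assert (length S <= 1)%nat by (apply (len_le_1 S []); auto; intros y Hy; apply (HS y Hy)).
    apply le_INR in H. simpl in *. pose proof (GG_le1 p Hp l). pose proof (GG_pos p Hp l).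
    pose proof (pos_INR (length S)). nra.
  - assert (length S <= 1)%nat by (apply (len_le_1 S [b]); auto; intros y Hy; apply (HS y Hy)).
    apply le_INR in H. simpl in *. pose proof (GG_le1 p Hp l). pose proof (GG_pos p Hp l).
    pose proof (pos_INR (length S)). nra.
  - set (f := fun y => if excluded_middle_informative (lang v1 y) then true else false).
    assert (C1 : cons_ p v1) by (intros y y' H1 H2; apply Hc; simpl; auto).
    assert (C2 : cons_ p v2) by (intros y y' H1 H2; apply Hc; simpl; auto).
    assert (E1 := IH1 C1 (filter f S) l (NoDup_filter _ Hn)).
    assert (E2 := IH2 C2 (filter (fun x => negb (f x)) S) l (NoDup_filter _ Hn)).
    assert (P1 : forall y, In y (filter f S) -> lang v1 y /\ length y = l).
    { intros y Hy. apply filter_In in Hy as [Hy Hf]. unfold f in Hf.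
      destruct (excluded_middle_informative _); try discriminate. split; auto. apply HS; auto. }
    assert (P2 : forall y, In y (filter (fun x => negb (f x)) S) -> lang v2 y /\ length y = l).
    { intros y Hy. apply filter_In in Hy as [Hy Hf]. unfold f in Hf.
      destruct (excluded_middle_informative _); try discriminate.
      destruct (HS y Hy) as [[H|H] Hl]; [contradiction|]. split; auto. }
    specialize (E1 P1). specialize (E2 P2).
    pose proof (filter_split f S) as Hs. apply le_INR in Hs. rewrite plus_INR in Hs.
    pose proof (GG_pos p Hp l).
    simpl rsize. rewrite S_INR, plus_INR.
    assert (INR (length S) * GG p l <= (INR (length (filter f S)) + INR (length (filter (fun x => negb (f x)) S))) * GG p l)
      by (apply Rmult_le_compat_r; lra).
    pose proof (pos_INR (rsize v1)). lra.
  - destruct S as [|y0 S0].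
    { simpl length. rewrite Rmult_0_l. apply pos_INR. }
    destruct (HS y0 (or_introl eq_refl)) as [[u0 [w0 [Hy0 [Hu0 Hw0]]]] Hl0].
    set (l1 := length u0). set (l2 := length w0).
    assert (Hl : l = (l1 + l2)%nat) by (subst; unfold l1, l2; rewrite length_app; auto).
    assert (C1 : cons_ p v1).
    { intros u u' Hu Hu'.
      destruct (Hc (u ++ w0) (u' ++ w0)) as [A1 A2]; [exists u, w0; auto | exists u', w0; auto|].
      rewrite !length_app in A1. split; [lia|].
      rewrite !bin_app in A2. apply mod_add_cancel in A2; [|lia].
      apply mod_mul2_cancel in A2; auto; lia. }
    assert (C2 : cons_ p v2).
    { intros w w' Hw Hw'.
      destruct (Hc (u0 ++ w) (u0 ++ w')) as [A1 A2]; [exists u0, w; auto | exists u0, w'; auto|].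
      rewrite !length_app in A1. split; [lia|].
      rewrite !bin_app in A2. replace (length w') with (length w) in A2 by lia.
      rewrite !(Nat.add_comm (bin u0 * _)) in A2. apply mod_add_cancel in A2; [|lia]. auto. }
    set (S := y0 :: S0) in *.
    assert (Hsplit : forall y, In y S -> lang v1 (firstn l1 y) /\ length (firstn l1 y) = l1
                                   /\ lang v2 (skipn l1 y) /\ length (skipn l1 y) = l2).
    { intros y Hy. destruct (HS y Hy) as [[u [w [Hyuw [Hu Hw]]]] Hly].
      assert (length u = l1) by (apply (C1 u u0 Hu Hu0)).
      assert (length w = l2) by (apply (C2 w w0 Hw Hw0)).
      subst y. rewrite <- H, firstn_app_len, skipn_app_len. auto. }
    set (dec := list_eq_dec Bool.bool_dec).
    set (T1 := nodup dec (map (firstn l1) S)).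
    set (T2 := nodup dec (map (skipn l1) S)).
    assert (HT1 : forall u, In u T1 -> lang v1 u /\ length u = l1).
    { intros u Hu. apply nodup_In, in_map_iff in Hu as [y [Hyu Hy]]. subst u.
      destruct (Hsplit y Hy) as [? [? _]]; auto. }
    assert (HT2 : forall w, In w T2 -> lang v2 w /\ length w = l2).
    { intros w Hw. apply nodup_In, in_map_iff in Hw as [y [Hyw Hy]]. subst w.
      destruct (Hsplit y Hy) as [_ [_ [? ?]]]; auto. }
    assert (Hprod : (length S <= length T1 * length T2)%nat).
    { apply (prod_bound S l1); auto. intros y Hy. split; apply nodup_In, in_map; auto. }
    assert (B1 : (length T1 <= (2 ^ l1 - 1) / p + 1)%nat).
    { apply (class_bound p T1 l1 (bin u0 mod p)); [lia | apply NoDup_nodup |].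
      intros u Hu. destruct (HT1 u Hu). split; auto. apply (C1 u u0); auto. }
    assert (B2 : (length T2 <= (2 ^ l2 - 1) / p + 1)%nat).
    { apply (class_bound p T2 l2 (bin w0 mod p)); [lia | apply NoDup_nodup |].
      intros w Hw. destruct (HT2 w Hw). split; auto. apply (C2 w w0); auto. }
    pose proof (IH1 C1 T1 l1 (NoDup_nodup _ _) HT1) as I1.
    pose proof (IH2 C2 T2 l2 (NoDup_nodup _ _) HT2) as I2.
    simpl rsize. rewrite S_INR, plus_INR.
    pose proof (pos_INR (rsize v1)). pose proof (pos_INR (rsize v2)).
    apply le_INR in Hprod. rewrite mult_INR in Hprod.
    pose proof (GG_pos p Hp l).
    assert (Hx : INR (length S) * GG p l <= INR (length T1) * INR (length T2) * GG p l)
      by (apply Rmult_le_compat_r; lra).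
    pose proof (pos_INR (length T1)). pose proof (pos_INR (length T2)).
    subst l. rewrite Hl in *. destruct (le_lt_dec l2 l1) as [Hle|Hlt].
    + pose proof (K_lemma p Hp l1 l2 (length T2) B2 Hle) as K.
      assert (INR (length T1) * (GG p (l1 + l2) * INR (length T2)) <= INR (length T1) * GG p l1)
        by (apply Rmult_le_compat_l; lra).
      replace (INR (length T1) * INR (length T2) * GG p (l1 + l2)) with
        (INR (length T1) * (GG p (l1 + l2) * INR (length T2))) in Hx by ring.
      lra.
    + pose proof (K_lemma p Hp l2 l1 (length T1) B1 ltac:(lia)) as K.
      rewrite Nat.add_comm in K.
      assert (INR (length T2) * (GG p (l1 + l2) * INR (length T1)) <= INR (length T2) * GG p l2)
        by (apply Rmult_le_compat_l; lra).
      replace (INR (length T1) * INR (length T2) * GG p (l1 + l2)) with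
        (INR (length T2) * (GG p (l1 + l2) * INR (length T1))) in Hx by ring.
      lra.
Qed.

Open Scope R_scope.

Lemma final_ineq p n : (3 <= p)%nat -> (1 <= n)%nat ->
  1 * / INR n * Rpower (INR p) (log2 (INR n / log2 (INR p)) - 2) <= FF p n / INR p.
Proof.
  intros Hp Hn.
  pose proof (Lg_gt1 p Hp) as HL. pose proof (lnp_eq p Hp) as Hlp. pose proof ln2_pos as H2.
  pose proof (INRp p Hp) as HP.
  assert (HN : 1 <= INR n) by (apply le_INR in Hn; simpl in Hn; lra).
  change (log2 (INR p)) with (Lg p).
  unfold Rpower, log2, FF.
  assert (E1 : ln (INR n / Lg p) = ln (INR n) - ln (Lg p)).
  { unfold Rdiv. rewrite ln_mult, ln_Rinv; try lra. apply Rinv_0_lt_compat; lra. }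
  rewrite E1.
  assert (E2 : ln (TT p) = ln 2 + ln (Lg p)) by (unfold TT; apply ln_mult; lra).
  rewrite E2.
  assert (HM : ln (INR n) <= ln (MM p n)) by (apply ln_le'; [lra| unfold MM; apply Rmax_l]).
  assert (HlL : 0 < ln (Lg p)) by (rewrite <- ln_1; apply ln_increasing; lra).
  assert (In : / INR n = exp (- ln (INR n))) by (rewrite exp_Ropp, exp_ln; lra).
  assert (Ip : / INR p = exp (- ln (INR p))) by (rewrite exp_Ropp, exp_ln; lra).
  unfold Rdiv at 2. rewrite In, Ip, Rmult_1_l, <- !exp_plus. apply exp_le'.
  rewrite Hlp. unfold aa.
  set (x := ln (INR n)). set (m := ln (MM p n)). set (L := Lg p). set (t := ln 2). set (q := ln L).
  assert (0 <= (L - 1) * (m - x)).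
  { apply Rmult_le_pos.
    - unfold L; lra.
    - unfold m, x in *; lra. }
  assert (Eq : (L - 1) * (m - (t + q)) + - (L * t) - (- x + ((x - q) / t - 2) * (L * t))
     = (L - 1) * (m - x) + t + q).
  { field. unfold t; lra. }
  assert (0 < t) by (unfold t; lra). assert (0 < q) by (unfold q, L; lra). lra.
Qed.

Fixpoint tobin (m x : nat) : list bool :=
  match m with
  | 0 => []
  | S m' => tobin m' (x / 2) ++ [Nat.eqb (x mod 2) 1]
  end.

Lemma tobin_len m : forall x, length (tobin m x) = m.
Proof. induction m; intros x; simpl; auto. rewrite length_app, IHm. simpl. lia. Qed.

Lemma tobin_bin m : forall x, bin (tobin m x) = x mod 2 ^ m.
Proof.
  induction m; intros x.
  - simpl. unfold bin. simpl. symmetry. apply (Nat.mod_1_r x).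
  - change (tobin (S m) x) with (tobin m (x/2) ++ [Nat.eqb (x mod 2) 1]).
    rewrite bin_app, IHm. change (length [Nat.eqb (x mod 2) 1]) with 1%nat.
    replace (bin [Nat.eqb (x mod 2) 1]) with (x mod 2).
    2:{ pose proof (Nat.mod_upper_bound x 2 ltac:(lia)).
        destruct (x mod 2) as [|[|k]] eqn:E; unfold bin; simpl; auto; lia. }
    rewrite (Nat.pow_succ_r' 2 m), Nat.Div0.mod_mul_r. change (2 ^ 1)%nat with 2%nat. lia.
Qed.

Lemma root_count p n : (3 <= p)%nat -> (2 ^ n <= p * ((2 ^ n - 1) / p + 1))%nat.
Proof.
  intros Hp. pose proof (Nat.div_mod_eq (2 ^ n - 1) p). pose proof (Nat.mod_upper_bound (2 ^ n - 1) p ltac:(lia)).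
  assert (1 <= 2 ^ n)%nat by (pose proof (Nat.pow_nonzero 2 n); lia).
  nia.
Qed.

Open Scope R_scope.

Theorem theorem7p1 :
  exists c : R, 0 < c /\
    forall (p n : nat), Nat.Odd p -> (2 < p)%nat -> (1 <= n)%nat ->
    forall r : regex, describes r (Ldiv n p) ->
      c * / INR n * Rpower (INR p) (log2 (INR n / log2 (INR p)) - 2)
        <= INR (rsize r).
Proof.
  exists 1. split; [lra|].
  intros p n Hodd Hp2 Hn r Hr.
  assert (Hp : (3 <= p)%nat) by lia.
  assert (Hc : cons_ p r).
  { intros y y' H1 H2. apply Hr in H1 as [A1 B1]. apply Hr in H2 as [A2 B2]. split; lia. }
  set (K := ((2 ^ n - 1) / p)%nat).
  set (S := map (fun k => tobin n (k * p)) (seq 0 (K + 1))).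
  assert (Hlt : forall k, In k (seq 0 (K + 1)) -> (k * p < 2 ^ n)%nat).
  { intros k Hk. apply in_seq in Hk. pose proof (Nat.div_mod_eq (2 ^ n - 1) p).
    pose proof (Nat.pow_nonzero 2 n ltac:(lia)). fold K in H. nia. }
  assert (HnS : NoDup S).
  { apply NoDup_map_inj; [apply seq_NoDup|]. intros k k' Hk Hk' E.
    apply (f_equal bin) in E. rewrite !tobin_bin, !Nat.mod_small in E by auto.
    nia. }
  assert (HS : forall y, In y S -> lang r y /\ length y = n).
  { intros y Hy. apply in_map_iff in Hy as [k [Hk Hks]]. subst y.
    rewrite tobin_len. split; auto. apply Hr. split; [apply tobin_len|].
    rewrite tobin_bin, (Nat.mod_small (k * p) (2 ^ n)) by (apply Hlt; auto). apply Nat.Div0.mod_mul. }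
  pose proof (main_lemma p Hp Hodd r Hc S n HnS HS) as M.
  unfold S in M. rewrite length_map, length_seq in M.
  pose proof (final_ineq p n Hp Hn) as Fi.
  apply Rle_trans with (FF p n / INR p); auto.
  apply Rle_trans with (INR (K + 1) * GG p n); auto.
  pose proof (root_count p n Hp) as Rc. fold K in Rc. apply le_INR in Rc.
  rewrite mult_INR, pow_INR in Rc. replace (INR 2) with 2 in Rc by (simpl; ring).
  pose proof (INRp p Hp). pose proof (pow_lt 2 n ltac:(lra)).
  unfold GG. assert (0 <= FF p n) by (unfold FF; left; apply exp_pos).
  apply (Rmult_le_reg_r (INR p * 2 ^ n)); [apply Rmult_lt_0_compat; lra|].
  replace (FF p n / INR p * (INR p * 2 ^ n)) with (FF p n * 2 ^ n) by (field; lra).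
  replace (INR (K + 1) * (FF p n / 2 ^ n) * (INR p * 2 ^ n)) with (FF p n * (INR p * INR (K + 1))) by (field; lra).
  apply Rmult_le_compat_l; lra.
Qed.
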